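(* Let $A$ be a finite abelian group of even order and let $T$ be a square-free subset of $A$ with $|T|=|A|/2-1$. If $|T-T^0|<|A|$, where $T^0=T\cup\{0\}$, then $\mathrm{CayS}(A,T)$ admits a perfect code.
   Context: $A$ is written additively with identity $0$. An element $x$ of $A$ is a square if $x=2y$ for some $y\in A$; a subset is square-free if it contains no squares. For a square-free $T\subseteq A$, the Cayley sum graph $\mathrm{CayS}(A,T)$ is the simple graph with vertex set $A$ in which distinct $x,y$ are adjacent iff $x+y\in T$. A subset $C$ of the vertex set of a graph is a perfect code if every vertex is at distance at most one from exactly one vertex of $C$. For $B,C\subseteq A$, $B-C=\{b-c:b\in B,c\in C\}$. *)

(* Defs.v *)
From HB Require Import structures.
From mathcomp Require Import all_boot all_order all_algebra.
Set Implicit Arguments. Unset Strict Implicit. Unset Printing Implicit Defensive.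
Import GRing.Theory.
Local Open Scope ring_scope.

Definition is_square (A : finZmodType) (x : A) : bool :=
  [exists y : A, x == y *+ 2].

Definition square_free (A : finZmodType) (T : {set A}) : bool :=
  [forall x in T, ~~ is_square x].

Definition cays_adj (A : finZmodType) (T : {set A}) (x y : A) : bool :=
  (x != y) && (x + y \in T).

Definition perfect_code (A : finZmodType) (T : {set A}) (C : {set A}) : Prop :=
  forall v : A, #|[set c in C | (c == v) || cays_adj T v c]| = 1%N.

Definition set_diff_sum (A : finZmodType) (B C : {set A}) : {set A} :=
  [set b - c | b in B, c in C].

(* Main.v *)
Require Import Defs.
From mathcomp Require Import all_boot all_order all_algebra.
Import GRing.Theory.
Local Open Scope ring_scope.

Theorem corollary2p8 (A : finZmodType) (T : {set A}) :
  ~~ odd #|A| ->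
  square_free T ->
  #|T| = (#|A| %/ 2 - 1)%N ->
  (#|set_diff_sum T ((0%R : A) |: T)| < #|A|)%N ->
  exists C : {set A}, perfect_code T C.
Proof.
move=> ev sf cT lt.
have sqT : forall t, t \in T -> forall y : A, t != y *+ 2.
  move=> t tT y; move/forallP: sf => /(_ t); rewrite tT /= /is_square.
  by apply: contra => /eqP ->; apply/existsP; exists y.
have [g gX] : exists g, g \notin set_diff_sum T ((0 : A) |: T).
  have : ~~ ([set: A] \subset set_diff_sum T ((0 : A) |: T)).
    apply: contraL lt => /subset_leq_card; by rewrite cardsT leqNgt.
  by case/subsetPn => g _ gX; exists g.
have inD : forall t u, t \in T -> u \in (0 : A) |: T -> t - u \in set_diff_sum T ((0 : A) |: T).
  by move=> t u tT uT; apply: (imset2_f (fun b c => b - c)).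
have gT : g \notin T.
  apply: contra gX => gT; rewrite -[g]subr0; apply: inD => //; exact: setU11.
have gTT : forall t t', t \in T -> t' \in T -> g != t - t'.
  move=> t t' tT t'T; apply: contra gX => /eqP ->; apply: inD => //.
  by rewrite in_setU1 t'T orbT.
case: (eqVneq g 0) => [g0 | gn0].
  have T0 : T = set0.
    apply/setP => t; rewrite in_set0; apply/negP => tT.
    by move: (gTT t t tT tT); rewrite subrr g0 eqxx.
  exists [set: A] => v.
  have -> : [set c in [set: A] | (c == v) || cays_adj T v c] = [set v].
    apply/setP => c; rewrite !inE /cays_adj T0 inE andbF orbF.
    by rewrite eq_sym.
  by rewrite cards1.
set S0 := (0 : A) |: T.
set S1 := g |: [set v | v + g \in T].
have n0 : (0 < #|A|)%N by apply/card_gt0P; exists 0.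
have hn : (#|A| = #|A| %/ 2 + #|A| %/ 2)%N.
  have := divn_eq #|A| 2; rewrite modn2 (negbTE ev) addn0 => h.
  by rewrite {1}h muln2 -addnn.
have h2 : (0 < #|A| %/ 2)%N.
  rewrite divn_gt0 //; case: (#|A|) ev n0 => [|[|m]] //.
have c0 : #|S0| = (#|A| %/ 2)%N.
  rewrite cardsU1 cT.
  have -> : (0 : A) \notin T.
    by apply/negP => /sqT /(_ 0); rewrite mul0rn eqxx.
  by rewrite add1n subn1 prednK.
have c1 : #|S1| = (#|A| %/ 2)%N.
  rewrite cardsU1.
  have -> : [set v | v + g \in T] = (fun v => v + g) @^-1: T.
    by apply/setP => v; rewrite !inE.
  rewrite card_preimset; last by apply: addIr.
  rewrite cT inE.
  have -> : g + g \notin T by apply/negP => /sqT /(_ g); rewrite mulr2n eqxx.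
  by rewrite add1n subn1 prednK.
have dis : [disjoint S0 & S1].
  apply/pred0P => v /=; rewrite !inE.
  case: (eqVneq v 0) => [-> | vn0] /=.
    rewrite add0r (negbTE gT) orbF; apply/negP => /eqP h.
    by rewrite h eqxx in gn0.
  case: (boolP (v \in T)) => //= vT.
  case: (eqVneq v g) => [vg | vng] /=; first by rewrite -vg vT in gT.
  apply/negP => vgT.
  by move: (gTT _ _ vgT vT); rewrite addrC addKr eqxx.
have cov : forall v, (v \in S0) || (v \in S1).
  have : S0 :|: S1 = [set: A].
    apply/eqP; rewrite eqEcard subsetT cardsT cardsU.
    move/disjoint_setI0: dis => ->; by rewrite cards0 subn0 c0 c1 -hn leqnn.
  by move=> h v; rewrite -in_setU h inE.
have e0 : forall v, ((0 : A) == v) || cays_adj T v 0 = (v \in S0).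
  move=> v; rewrite /cays_adj addr0 !inE eq_sym.
  by case: (v == 0).
have e1 : forall v, (g == v) || cays_adj T v g = (v \in S1).
  move=> v; rewrite /cays_adj !inE eq_sym.
  by case: (v == g).
exists [set 0; g] => v.
case: (boolP (v \in S0)) => v0.
  have v1 : v \notin S1 by apply/negP => v1; move/pred0P: dis => /(_ v) /=; rewrite v0 v1.
  have -> : [set c in [set 0; g] | (c == v) || cays_adj T v c] = [set 0].
    apply/setP => c; rewrite !inE.
    case: (eqVneq c 0) => [-> | cn0] /=; first by rewrite -e0 in v0; rewrite v0.
    case: (eqVneq c g) => [-> | cng] //=.
    by rewrite e1 (negbTE v1).
  by rewrite cards1.
have v1 : v \in S1 by move: (cov v); rewrite (negbTE v0).
have -> : [set c in [set 0; g] | (c == v) || cays_adj T v c] = [set g].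
  apply/setP => c; rewrite !inE.
  case: (eqVneq c g) => [-> | cng] /=; first by rewrite orbT; rewrite -e1 in v1; rewrite v1.
  case: (eqVneq c 0) => [-> | cn0] //=.
  by rewrite e0 (negbTE v0).
by rewrite cards1.
Qed.
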